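(* Let $C_5 \rtimes_4 C_2$ be the group generated by $x, y$ with relations $x^2 = 1$, $y^5 = 1$, $yx = xy^4$, and let $H = \langle y \rangle$. Let $S$ be a sequence in $C_5 \rtimes_4 C_2$ with $|S| = 5$ that is free of product-$1$ subsequences. Then $S$ contains at least one element of $H$.
   Context: A sequence in a finite group $G$ is a finite list of elements of $G$, repetition allowed. A non-empty subsequence $(g_{n_1},\dots,g_{n_k})$ is a product-$1$ subsequence if $g_{\sigma(n_1)}\cdots g_{\sigma(n_k)} = 1$ for some permutation $\sigma$ of $\{n_1,\dots,n_k\}$; $S$ is free of product-$1$ subsequences if it has no such subsequence. *)

(* Defs.v *)
From mathcomp Require Import all_boot all_fingroup.
Set Implicit Arguments.
Unset Strict Implicit.
Unset Printing Implicit Defensive.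
Local Open Scope group_scope.

(* A subsequence of S is selected by a bit mask (subsequences are taken by
   positions, so repeated entries are handled correctly). *)
Definition product_one_subseq (gT : finGroupType) (S : seq gT) (m : bitseq) : Prop :=
  mask m S != [::] /\
  exists t : seq gT, perm_eq t (mask m S) /\ \prod_(g <- t) g = 1.

Definition product_one_free (gT : finGroupType) (S : seq gT) : Prop :=
  forall m : bitseq, ~ product_one_subseq S m.

(* Main.v *)
Require Import Defs.
From mathcomp Require Import all_boot all_fingroup.
Local Open Scope group_scope.

Lemma mask_single (T : eqType) (a : T) (s : seq T) :
  a \in s -> exists m, mask m s = [:: a].
Proof.
elim: s => // b s IH; rewrite inE; case: eqP => [-> _|_ /= /IH [m hm]].
  by exists (true :: nseq (size s) false); rewrite /= mask_false.
by exists (false :: m).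
Qed.

Lemma mask_dup (T : eqType) (s : seq T) :
  ~~ uniq s -> exists g, exists m, mask m s = [:: g; g].
Proof.
elim: s => // a s IH /=; rewrite negb_and negbK; case: (boolP (a \in s)).
  by move=> /mask_single [m hm] _; exists a, (true :: m); rewrite /= hm.
by move=> _ /= /IH [g [m hm]]; exists g, (false :: m).
Qed.

Lemma yx_pow (gT : finGroupType) (x y : gT) :
  y * x = x * y^-1 -> forall i, y ^+ i * x = x * (y^-1) ^+ i.
Proof.
move=> h; elim=> [|i IH]; first by rewrite !expg0 mul1g mulg1.
by rewrite !expgS -mulgA IH mulgA h -mulgA.
Qed.

Theorem proposition1 (gT : finGroupType) (x y : gT) (S : seq gT) :
  x ^+ 2 = 1 -> y ^+ 5 = 1 -> y * x = x * y ^+ 4 ->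
  #|<<[set x; y]>>| = 10 ->
  all (fun g => g \in <<[set x; y]>>) S ->
  size S = 5 ->
  product_one_free S ->
  exists2 g, g \in S & g \in <[y]>.
Proof.
move=> hx hy hyx _ hS hsz hfree.
have y4 : y ^+ 4 = y^-1.
  by apply/esym/eqP; rewrite eq_invg_mul -expgS hy.
have xV : x^-1 = x by apply/eqP; rewrite eq_invg_mul -expg2 hx.
have xx : x * x = 1 by rewrite -expg2 hx.
rewrite y4 in hyx.
have hyp := @yx_pow _ x y hyx.
have refl2 : forall i, (x * y ^+ i) * (x * y ^+ i) = 1.
  move=> i; rewrite -mulgA (mulgA (y ^+ i)) hyp !mulgA xx mul1g expVgn mulVg //.
case: (boolP (has (mem <[y]>) S)) => [/hasP [g gS gy]|hn]; first by exists g.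
exfalso.
have nyx : x \in 'N(<[y]>).
  rewrite inE -cycleJ cycle_subG conjgE xV hyx mulgA xx mul1g groupV.
  exact: cycle_id.
have hG : <<[set x; y]>> = <[x]> * <[y]>.
  rewrite -comm_joingE; last by apply: normC; rewrite cycle_subG.
  by rewrite joing_idl joing_idr.
have hT : {subset S <= mkseq (fun i => x * y ^+ i) 5}.
  move=> g gS; have := allP hS g gS; rewrite hG => /imset2P [a b ha hb gE].
  move/cycleP: ha => [k ak]; move/cycleP: hb => [i bi].
  have gny : g \notin <[y]> by move/hasPn: hn => /(_ _ gS).
  rewrite gE ak bi -(expg_mod k hx) in gny *.
  have : k %% 2 < 2 by rewrite ltn_pmod.
  case: (k %% 2) gny => [|[|//]] gny _.
    by move: gny; rewrite expg0 mul1g mem_cycle.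
  rewrite expg1 -(expg_mod i hy); apply/mapP; exists (i %% 5) => //.
  by rewrite mem_iota /= ltn_pmod.
case: (boolP (uniq S)) => hu.
- have [_ eqST] := uniq_min_size hu hT (ltac:(by rewrite size_mkseq hsz)).
  have uT : uniq (mkseq (fun i => x * y ^+ i) 5).
    by apply: (leq_size_uniq hu hT); rewrite size_mkseq hsz.
  set t0 := [:: x * y ^+ 0; x * y ^+ 1; x * y ^+ 2; x * y ^+ 3].
  have ut0 : uniq t0.
    by move: uT; rewrite /mkseq /= !inE !negb_or; case/and5P => /and4P [-> -> -> _] /and3P [-> -> _] /andP [-> _] _ _.
  apply: (hfree [seq g \in t0 | g <- S]); split.
    apply/eqP => h; have : x * y ^+ 0 \in [seq g <- S | g \in t0].
      by rewrite mem_filter inE eqxx /= eqST /mkseq /= inE eqxx.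
    by rewrite filter_mask h.
  exists [:: x * y ^+ 0; x * y ^+ 1; x * y ^+ 3; x * y ^+ 2]; split.
    rewrite -filter_mask perm_sym; apply: (@perm_trans _ t0).
      apply: uniq_perm => //; first by apply: filter_uniq.
      move=> g; rewrite mem_filter; case gt: (g \in t0) => //=.
      by rewrite eqST /mkseq /=; move: gt; rewrite !inE => /or4P [] ->; rewrite ?orbT.
    by rewrite /t0 !perm_cons (perm_catCA [:: _] [:: _] [::]).
  rewrite !big_cons big_nil !mulg1 !expg1 !mulgA xx mul1g hyx -(mulgA x).
  rewrite mulVg mulg1; have := refl2 2; by rewrite expg2 !mulgA.
- have [g [m hm]] := @mask_dup _ S hu.
  have : g \in S by apply: (@mem_mask _ g m); rewrite hm inE eqxx.
  move=> /hT /mapP [i _ gE]; rewrite gE in hm.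
  apply: (hfree m); split; first by rewrite hm.
  by exists [:: x * y ^+ i; x * y ^+ i]; rewrite hm perm_refl !big_cons big_nil mulg1 refl2.
Qed.
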